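(* Let $H$ be a history generated by KSFTM and $T_i$ a transaction of $H$. If (after the last event of $H$) $tutl_i < ct_i$, then there exists a transaction $T_j$ committed in $H$ with $wts_j > wts_i$.
   Context: Algorithm KSFTM (parameters $K\ge1$, $C>0$, $incVal\ge1$). Global atomic counter $G\_tCntr$, initially 1. Each t-object $x$ stores at most $K$ versions $\langle ts, val, rl, vrt\rangle$; initially $\langle 0,0,\emptyset,0\rangle$; a version with timestamp $ts>0$ is installed only by a committing transaction $T_j$ as $\langle wts_j, v, \emptyset, tltl_j\rangle$. Transaction $T_i$ has $its_i, cts_i, wts_i$, limits $tltl_i, tutl_i$, commit time $ct_i$, flag $valid_i$, status. begin($its$): $cts_i$ := counter value, counter atomically incremented; $its_i := cts_i$ if $its$ nil else $its$; $wts_i := cts_i + C(cts_i-its_i)$; $tltl_i := cts_i$; $tutl_i := ct_i := \infty$. read($x$) (non-local): $cur$ := version with largest $ts < wts_i$ (abort if none); if a version $next$ with smallest $ts>wts_i$ exists, $tutl_i := \min(tutl_i, next.vrt-1)$; $tltl_i := \max(tltl_i, cur.vrt+1)$; abort if $tltl_i > tutl_i$; otherwise record the read in $cur.rl$. tryC: abort if $valid_i$ false; for written $x$: $prev_x$ (largest $ts<wts_i$, abort if none), $next_x$ (smallest $ts>wts_i$); conflict checks against readers of $prev_x$ with larger $wts$ (abort $T_i$ or mark them); $tltl_i := \max(tltl_i, prev_x.vrt+1)$, $tutl_i := \min(tutl_i, next_x.vrt-1)$; $ct_i$ := counter atomically increased by $incVal$ (new value); $tutl_i := \min(tutl_i,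 ct_i)$; abort if $tltl_i > tutl_i$; checks against readers $T_k$ of $prev_x$ with smaller $wts$ and $tltl_k \ge tutl_i$ (abort $T_i$ or mark $T_k$); then $tltl_i := tutl_i$; for such unaborted readers $T_k$, $tutl_k := \min(tutl_k, tltl_i-1)$; invalidate marked transactions; install for each written $x$ the version $\langle wts_i, v, \emptyset, tltl_i\rangle$; commit. abort: $valid_i$ false, status abort. *)

(* Defs.v *)
(* An operational model of the KSFTM algorithm:
   every operation (begin, read, write, tryC, tryA) is executed atomically;
   a history is the sequence of operations issued, and the state reached
   after its last event records all algorithm variables. *)
From mathcomp Require Import all_boot all_order all_algebra.
Set Implicit Arguments. Unset Strict Implicit. Unset Printing Implicit Defensive.
Import Order.TTheory GRing.Theory Num.Theory.
Local Open Scope ring_scope.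

Inductive ext := Fin of nat | Inf.
Definition emin (a b : ext) : ext :=
  match a, b with
  | Fin m, Fin n => Fin (minn m n)
  | Fin m, Inf => Fin m
  | Inf, _ => b
  end.
Definition elt (a b : ext) : bool :=
  match a, b with
  | Fin m, Fin n => (m < n)%N
  | Fin _, Inf => true
  | Inf, _ => false
  end.
Definition ngt (n : nat) (e : ext) : bool :=
  match e with Fin m => (m < n)%N | Inf => false end.
Definition nge (n : nat) (e : ext) : bool :=
  match e with Fin m => (m <= n)%N | Inf => false end.

Inductive status := Live | Committed | Aborted.
Definition is_aborted (st : status) : bool :=
  match st with Aborted => true | _ => false end.
Definition is_live (st : status) : bool :=
  match st with Live => true | _ => false end.

Section KSFTM.
Variable R : realFieldType.

(* a version <ts, val, rl, vrt> ; t-object values are natural numbers,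
   transaction ids and t-object ids are natural numbers *)
Record Ver := mkVer { v_ts : R; v_val : nat; v_rl : seq nat; v_vrt : nat }.
Definition v0 : Ver := mkVer 0 0 [::] 0.

Record Tx := mkTx {
  t_its : nat; t_cts : nat; t_wts : R;
  t_tltl : nat; t_tutl : ext; t_ct : ext;
  t_valid : bool; t_status : status;
  t_rs : seq (nat * nat);   (* local read set  (x, value) *)
  t_ws : seq (nat * nat)    (* local write set (x, value) *)
}.

Record St := mkSt {
  cntr : nat;
  txs : nat -> option Tx;     (* None : transaction not (yet) begun *)
  objs : nat -> seq Ver
}.

Definition init_st : St :=
  mkSt 1 (fun _ => None) (fun _ => [:: v0]).

Definition set_tltl (t : Tx) n := mkTx (t_its t) (t_cts t) (t_wts t) n (t_tutl t)
  (t_ct t) (t_valid t) (t_status t) (t_rs t) (t_ws t).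
Definition set_tutl (t : Tx) e := mkTx (t_its t) (t_cts t) (t_wts t) (t_tltl t) e
  (t_ct t) (t_valid t) (t_status t) (t_rs t) (t_ws t).
Definition set_ct (t : Tx) e := mkTx (t_its t) (t_cts t) (t_wts t) (t_tltl t) (t_tutl t)
  e (t_valid t) (t_status t) (t_rs t) (t_ws t).
Definition set_valid (t : Tx) b := mkTx (t_its t) (t_cts t) (t_wts t) (t_tltl t) (t_tutl t)
  (t_ct t) b (t_status t) (t_rs t) (t_ws t).
Definition set_status (t : Tx) st := mkTx (t_its t) (t_cts t) (t_wts t) (t_tltl t) (t_tutl t)
  (t_ct t) (t_valid t) st (t_rs t) (t_ws t).
Definition set_rs (t : Tx) l := mkTx (t_its t) (t_cts t) (t_wts t) (t_tltl t) (t_tutl t)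
  (t_ct t) (t_valid t) (t_status t) l (t_ws t).
Definition set_ws (t : Tx) l := mkTx (t_its t) (t_cts t) (t_wts t) (t_tltl t) (t_tutl t)
  (t_ct t) (t_valid t) (t_status t) (t_rs t) l.

Definition upd_tx (s : St) (i : nat) (t : Tx) : St :=
  mkSt (cntr s) (fun k => if k == i then Some t else txs s k) (objs s).
Definition upd_obj (s : St) (x : nat) (vs : seq Ver) : St :=
  mkSt (cntr s) (txs s) (fun y => if y == x then vs else objs s y).
Definition set_cntr (s : St) (n : nat) : St := mkSt n (txs s) (objs s).
Definition map_tx (f : Tx -> Tx) (s : St) (k : nat) : St :=
  match txs s k with Some tk => upd_tx s k (f tk) | None => s end.

Definition abort_tx (t : Tx) : Tx := set_status (set_valid t false) Aborted.
Definition do_abort (s : St) (i : nat) (t : Tx) : St := upd_tx s i (abort_tx t).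

Fixpoint assoc (x : nat) (l : seq (nat * nat)) : option nat :=
  match l with
  | [::] => None
  | (y, v) :: l' => if y == x then Some v else assoc x l'
  end.

Definition prev_idx (w : R) (vs : seq Ver) : option nat :=
  foldr (fun k acc =>
    let v := nth v0 vs k in
    if v_ts v < w then
      match acc with
      | Some b => if v_ts (nth v0 vs b) < v_ts v then Some k else acc
      | None => Some k
      end
    else acc) None (iota 0 (size vs)).

Definition next_idx (w : R) (vs : seq Ver) : option nat :=
  foldr (fun k acc =>
    let v := nth v0 vs k in
    if w < v_ts v then
      match acc with
      | Some b => if v_ts v < v_ts (nth v0 vs b) then Some k else acc
      | None => Some k
      end
    else acc) None (iota 0 (size vs)).

Definition min_idx (vs : seq Ver) : nat :=
  foldr (fun k b => if v_ts (nth v0 vs k) < v_ts (nth v0 vs b) then k else b)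
    0%N (iota 0 (size vs)).

Definition install (K : nat) (nv : Ver) (vs : seq Ver) : seq Ver :=
  if (size vs < K)%N then rcons vs nv
  else let j := min_idx vs in rcons (take j vs ++ drop j.+1 vs) nv.

Definition next_tutl (w : R) (vs : seq Ver) (tu : ext) : ext :=
  match next_idx w vs with
  | Some n => emin tu (Fin (v_vrt (nth v0 vs n)).-1)
  | None => tu
  end.

Definition read_nl (s : St) (i : nat) (t : Tx) (x : nat) : St :=
  let vs := objs s x in
  match prev_idx (t_wts t) vs with
  | None => do_abort s i t
  | Some c =>
    let cur := nth v0 vs c in
    let t1 := set_tutl t (next_tutl (t_wts t) vs (t_tutl t)) in
    let t2 := set_tltl t1 (maxn (t_tltl t1) (v_vrt cur).+1) in
    if ngt (t_tltl t2) (t_tutl t2) then do_abort s i t2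
    else
      let cur' := mkVer (v_ts cur) (v_val cur) (i :: v_rl cur) (v_vrt cur) in
      upd_obj (upd_tx s i (set_rs t2 ((x, v_val cur) :: t_rs t2))) x
              (set_nth v0 vs c cur')
  end.

Definition wts_of (s : St) (k : nat) : option R :=
  match txs s k with Some tk => Some (t_wts tk) | None => None end.
Definition larger_reader (s : St) (w : R) (k : nat) : bool :=
  match wts_of s k with Some wk => w < wk | None => false end.
Definition smaller_reader (s : St) (w : R) (k : nat) : bool :=
  match wts_of s k with Some wk => wk < w | None => false end.
Definition tltl_ge (s : St) (tu : nat) (k : nat) : bool :=
  match txs s k with Some tk => (tu <= t_tltl tk)%N | None => false end.

(* first loop of tryC over the written objects: prev_x / next_x, conflict
   checks against readers of prev_x with larger wts (the choice
   "abort T_i (true) or mark T_k (false)" is given by d), tltl/tutl update.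
   Result: inl t = T_i aborts with record t; inr (t, marked). *)
Fixpoint phaseA (s : St) (d : nat -> nat -> bool) (ws : seq (nat * nat))
    (t : Tx) (mk : seq nat) : Tx + (Tx * seq nat) :=
  match ws with
  | [::] => inr (t, mk)
  | (x, _) :: ws' =>
    let vs := objs s x in
    match prev_idx (t_wts t) vs with
    | None => inl t
    | Some p =>
      let pv := nth v0 vs p in
      let big := [seq k <- v_rl pv | larger_reader s (t_wts t) k] in
      if has (d x) big then inl t else
      let t1 := set_tltl t (maxn (t_tltl t) (v_vrt pv).+1) in
      let t2 := set_tutl t1 (next_tutl (t_wts t) vs (t_tutl t1)) in
      phaseA s d ws' t2 (big ++ mk)
    end
  end.

Definition small_readers (s : St) (w : R) (ws : seq (nat * nat)) : seq nat :=
  flatten [seq match prev_idx w (objs s xv.1) with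
               | Some p => [seq k <- v_rl (nth v0 (objs s xv.1) p) | smaller_reader s w k]
               | None => [::]
               end | xv <- ws].

(* second conflict check: readers T_k of prev_x with smaller wts and
   tltl_k >= tutl_i; choice given by d. None = T_i aborts, Some marked. *)
Definition phaseB (s : St) (d : nat -> nat -> bool) (w : R) (tu : nat)
    (ws : seq (nat * nat)) : option (seq nat) :=
  foldr (fun xv acc =>
    match acc with
    | None => None
    | Some mk =>
      match prev_idx w (objs s xv.1) with
      | None => acc
      | Some p =>
        let cf := [seq k <- v_rl (nth v0 (objs s xv.1) p)
                   | smaller_reader s w k && tltl_ge s tu k] in
        if has (d xv.1) cf then None else Some (cf ++ mk)
      end
    end) (Some [::]) ws.

Variables (K : nat) (C : R) (incVal : nat).

Definition tryC (s : St) (i : nat) (t : Tx) (dA dB : nat -> nat -> bool) : St :=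
  if ~~ t_valid t then do_abort s i t else
  match phaseA s dA (t_ws t) t [::] with
  | inl t' => do_abort s i t'
  | inr (t1, mkA) =>
    let ctv := (cntr s + incVal)%N in
    let s1 := set_cntr s ctv in
    let t2 := set_tutl (set_ct t1 (Fin ctv)) (emin (t_tutl t1) (Fin ctv)) in
    if ngt (t_tltl t2) (t_tutl t2) then do_abort s1 i t2 else
    let tu := match t_tutl t2 with Fin n => n | Inf => ctv end in
    match phaseB s dB (t_wts t2) tu (t_ws t2) with
    | None => do_abort s1 i t2
    | Some mkB =>
      let t3 := set_tltl t2 tu in
      let s2 := foldl (map_tx (fun tk => if is_aborted (t_status tk) then tk
                                 else set_tutl tk (emin (t_tutl tk) (Fin tu.-1))))
                      s1 (small_readers s (t_wts t2) (t_ws t2)) in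
      let s3 := foldl (map_tx (fun tk => set_valid tk false)) s2 (mkA ++ mkB) in
      let s4 := foldl (fun s' xv =>
                   upd_obj s' xv.1 (install K (mkVer (t_wts t2) xv.2 [::] tu) (objs s' xv.1)))
                  s3 (t_ws t2) in
      upd_tx s4 i (set_status t3 Committed)
    end
  end.

Inductive event :=
  | EBegin of nat & option nat  (* T_i begins; its given as the its of an earlier T_k, or nil *)
  | ERead of nat & nat          (* T_i reads x *)
  | EWrite of nat & nat & nat   (* T_i writes v to x *)
  | ETryC of nat
  | ETryA of nat.

Inductive step : St -> event -> St -> Prop :=
  | st_begin s i oits :
      txs s i = None ->
      (forall k, oits = Some k -> txs s k <> None) ->
      let cts := cntr s in
      let its := match oits with
                 | Some k => match txs s k with Some tk => t_its tk | None => cts end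
                 | None => cts end in
      let wts := cts%:R + C * (cts - its)%N%:R in
      step s (EBegin i oits)
        (upd_tx (set_cntr s cts.+1) i
           (mkTx its cts wts cts Inf Inf true Live [::] [::]))
  | st_read_local s i x t :
      txs s i = Some t -> is_live (t_status t) ->
      (assoc x (t_ws t) != None) || (assoc x (t_rs t) != None) ->
      step s (ERead i x) s
  | st_read s i x t :
      txs s i = Some t -> is_live (t_status t) ->
      assoc x (t_ws t) = None -> assoc x (t_rs t) = None ->
      step s (ERead i x) (read_nl s i t x)
  | st_write s i x v t :
      txs s i = Some t -> is_live (t_status t) ->
      step s (EWrite i x v)
        (upd_tx s i (set_ws t ((x, v) :: [seq yw <- t_ws t | yw.1 != x])))
  | st_tryC s i t dA dB :
      txs s i = Some t -> is_live (t_status t) ->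
      step s (ETryC i) (tryC s i t dA dB)
  | st_tryA s i t :
      txs s i = Some t -> is_live (t_status t) ->
      step s (ETryA i) (do_abort s i t).

(* gen H s : the history H (sequence of events, oldest first) is generated
   by KSFTM and s is the state after its last event *)
Inductive gen : seq event -> St -> Prop :=
  | gen_nil : gen [::] init_st
  | gen_snoc H s e s' : gen H s -> step s e s' -> gen (rcons H e) s'.

End KSFTM.

(* Main.v *)
Require Import Defs.
From mathcomp Require Import all_boot all_order all_algebra.
Set Implicit Arguments. Unset Strict Implicit. Unset Printing Implicit Defensive.
Import Order.TTheory GRing.Theory Num.Theory.
Local Open Scope ring_scope.

Section Proof.
Variable R : realFieldType.

Definition Big (s : St R) (w : R) := exists j tj, txs s j = Some tj /\
  t_status tj = Committed /\ w < t_wts tj.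
Definition OKv (s : St R) (v : Ver R) := forall w, 0 <= w -> w < v_ts v -> Big s w.
Definition Mono (s s' : St R) := forall j tj, txs s j = Some tj -> t_status tj = Committed ->
  exists tj', txs s' j = Some tj' /\ t_status tj' = Committed /\ t_wts tj' = t_wts tj.

Lemma Big_mono s s' w : Mono s s' -> Big s w -> Big s' w.
Proof.
move=> M [j [tj [H1 [H2 H3]]]]; have [tj' [H1' [H2' H3']]] := M _ _ H1 H2.
by exists j, tj'; rewrite H3'.
Qed.

Lemma OKv_mono s s' v : Mono s s' -> OKv s v -> OKv s' v.
Proof. by move=> M H w w0 wl; apply: Big_mono M _; apply: H. Qed.

Lemma OKv0 s : OKv s (v0 R).
Proof. by move=> w w0 /=; rewrite ltNge w0. Qed.

Definition txrel (Pf : Tx R -> Tx R -> Prop) (l : seq nat) (s s' : St R) :=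
  forall k, match txs s k, txs s' k with
            | None, None => True
            | Some a, Some b => Pf a b /\ (k \notin l -> b = a)
            | _, _ => False end.

Lemma fold_map_tx (f : Tx R -> Tx R) (Pf : Tx R -> Tx R -> Prop)
  (Pr : forall t, Pf t t) (Pt : forall a b c, Pf a b -> Pf b c -> Pf a c)
  (Hf : forall t, Pf t (f t)) l s :
  objs (foldl (map_tx f) s l) = objs s /\ cntr (foldl (map_tx f) s l) = cntr s /\
  txrel Pf l s (foldl (map_tx f) s l).
Proof.
elim: l s => [|k0 l IH] s /=.
  by split=> //; split=> // k; case: (txs s k).
have [O1 [C1 T1]] := IH (map_tx f s k0).
have E : objs (map_tx f s k0) = objs s /\ cntr (map_tx f s k0) = cntr s.
  by rewrite /map_tx; case: (txs s k0).
split; first by rewrite O1 E.1.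
split; first by rewrite C1 E.2.
move=> k; have := T1 k.
rewrite /map_tx; case E0: (txs s k0) => [t0|] /=; last first.
  case: (txs s k) => [a|]; case: (txs _ k) => [b|] //.
  by case=> P N; split=> // kn; apply: N; move: kn; rewrite in_cons negb_or => /andP[].
rewrite /upd_tx /=.
case: eqP => [-> | ne].
  rewrite E0; case: (txs _ k0) => [b|] //; case=> P N; split.
    by apply: Pt (Hf t0) P.
  by rewrite in_cons eqxx.
case: (txs s k) => [a|]; case: (txs _ k) => [b|] //.
case=> P N; split=> // kn; apply: N; move: kn; rewrite in_cons negb_or => /andP[].
by [].
Qed.


Lemma next_idx_lt w vs n : next_idx w vs = Some n -> w < v_ts (nth (v0 R) vs n).
Proof.
rewrite /next_idx; elim: (iota 0 (size vs)) n => [|k l IH] n //=.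
case: ifP => Hk; last exact: IH.
case E: (foldr _ _ l) => [b|].
  by case: ifP => _; [case=> <- | move=> H; apply: IH; rewrite E].
by case=> <-.
Qed.

Definition objsOK (s : St R) := forall x n, OKv s (nth (v0 R) (objs s x) n).

Lemma next_tutl_spec s w vs tu : 0 <= w -> (forall n, OKv s (nth (v0 R) vs n)) ->
  next_tutl w vs tu = tu \/ Big s w.
Proof.
move=> w0 OK; rewrite /next_tutl; case E: next_idx => [n|]; last by left.
by right; apply: (OK n) w0 (next_idx_lt E).
Qed.

Definition TxOK (s : St R) (t : Tx R) := 0 <= t_wts t /\
  (is_live (t_status t) -> t_ct t = Inf) /\
  (t_tutl t = Inf \/ t_tutl t = t_ct t \/ Big s (t_wts t)).

Definition Inv (s : St R) := (forall k tk, txs s k = Some tk -> TxOK s tk) /\ objsOK s.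

Lemma TxOK_mono s s' t : Mono s s' -> TxOK s t -> TxOK s' t.
Proof.
move=> M [A [B C]]; split=> //; split=> //.
by case: C => [->|[->|/(Big_mono M) ?]]; [left|right;left|right;right].
Qed.

Lemma TxOK_sim s a b : t_wts b = t_wts a -> t_ct b = t_ct a -> t_tutl b = t_tutl a ->
  (is_live (t_status b) -> is_live (t_status a)) -> TxOK s a -> TxOK s b.
Proof.
move=> W Ct Tu L [A [B C]]; rewrite /TxOK W Ct Tu; split=> //; split=> //.
by move/L/B.
Qed.

Lemma TxOK_big s t : 0 <= t_wts t -> (is_live (t_status t) -> t_ct t = Inf) ->
  Big s (t_wts t) -> TxOK s t.
Proof. by move=> A B C; split=> //; split=> //; right; right. Qed.

Lemma Mono_refl s : Mono s s.
Proof. by move=> j tj H1 H2; exists tj. Qed.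

Lemma Mono_trans s1 s2 s3 : Mono s1 s2 -> Mono s2 s3 -> Mono s1 s3.
Proof.
move=> M1 M2 j tj H1 H2; have [tj' [A [B C]]] := M1 _ _ H1 H2.
have [tj'' [A' [B' C']]] := M2 _ _ A B; exists tj''; by rewrite C' C.
Qed.

Lemma Mono_upd s s1 i t' : Mono s s1 ->
  (forall t, txs s i = Some t -> t_status t <> Committed) -> Mono s (upd_tx s1 i t').
Proof.
move=> M N j tj H1 H2; rewrite /upd_tx /=; case: eqP => [E|_].
  by subst j; case: (N _ H1 H2).
exact: M.
Qed.

Lemma Mono_cntr s n : Mono s (set_cntr s n).
Proof. exact: Mono_refl. Qed.

Lemma Mono_obj s x vs : Mono s (upd_obj s x vs).
Proof. exact: Mono_refl. Qed.

Lemma live_nc (t : Tx R) : is_live (t_status t) -> t_status t <> Committed.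
Proof. by case: (t_status t). Qed.

Lemma txs_upd (s s' : St R) i t' : Mono s s' ->
  (forall k, k != i -> txs s' k = txs s k) -> txs s' i = Some t' -> TxOK s' t' ->
  (forall k tk, txs s k = Some tk -> TxOK s tk) ->
  forall k tk, txs s' k = Some tk -> TxOK s' tk.
Proof.
move=> M E Ei OK I k tk; case: (eqVneq k i) => [->|ne].
  by rewrite Ei => -[<-].
by rewrite E // => /I; apply: TxOK_mono.
Qed.


Definition Ph (s : St R) (t t' : Tx R) := t_wts t' = t_wts t /\ t_ct t' = t_ct t /\
  t_status t' = t_status t /\ (t_tutl t' = t_tutl t \/ Big s (t_wts t)).

Definition resA (r : Tx R + (Tx R * seq nat)) :=
  match r with inl t' => t' | inr (t', _) => t' end.

Lemma phaseA_spec s d ws t mk : 0 <= t_wts t -> objsOK s ->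
  Ph s t (resA (phaseA s d ws t mk)).
Proof.
move=> w0 OK; elim: ws t mk w0 => [|[x v] ws IH] t mk w0 /=.
  by split=> //; split=> //; split=> //; left.
case: prev_idx => [p|]; last by split=> //; split=> //; split=> //; left.
case: ifP => _; first by split=> //; split=> //; split=> //; left.
set t2 := set_tutl _ _.
have W : t_wts t2 = t_wts t by [].
move: (_ ++ mk) => mk2; have := IH t2 mk2; rewrite W => /(_ w0) [A [B [Cc D]]].
split=> //; split=> //; split=> //.
case: D => [->|]; last by right.
rewrite /t2 /=.
by case: (next_tutl_spec (t_tutl t) w0 (OK x)) => [->|]; [left|right].
Qed.

Lemma small_readers_spec (s : St R) w ws k : k \in small_readers s w ws ->
  exists tk, txs s k = Some tk /\ t_wts tk < w.
Proof.
rewrite /small_readers; elim: ws => [|xv ws IH] //=.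
rewrite mem_cat => /orP[|/IH //].
case: prev_idx => [p|] //; rewrite mem_filter => /andP[].
rewrite /smaller_reader /wts_of; case: (txs s k) => [tk|] // H _.
by exists tk.
Qed.

Lemma install_fold K W tu (l : seq (nat * nat)) (s0 : St R) :
  let g := fun (s' : St R) (xv : nat * nat) =>
      upd_obj s' xv.1 (install K (mkVer W xv.2 [::] tu) (objs s' xv.1)) in
  txs (foldl g s0 l) = txs s0 /\
  forall x n, (exists m, nth (v0 R) (objs (foldl g s0 l) x) n = nth (v0 R) (objs s0 x) m)
      \/ v_ts (nth (v0 R) (objs (foldl g s0 l) x) n) = W.
Proof.
move=> g; elim: l s0 => [|xv l IH] s0 /=.
  by split=> // x n; left; exists n.
have [T N] := IH (g s0 xv); split=> // x n.
case: (N x n) => [[m ->]|]; last by right.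
rewrite /g /=; case: eqP => [->|_]; last by left; exists m.
rewrite /install; case: ifP => _.
  rewrite nth_rcons; case: ifP => _; first by left; exists m.
  case: ifP => _; first by right.
  by left; exists (size (objs s0 xv.1)); rewrite nth_default.
rewrite nth_rcons size_cat size_take size_drop; case: ifP => Hm.
  rewrite nth_cat size_take; case: ifP => Hm2.
    left; exists m; move: Hm2; case: ifP => H1 H2; first by rewrite nth_take. by rewrite take_oversize // leqNgt H1.
  by left; rewrite nth_drop; eexists.
case: ifP => _; first by right.
by left; exists (size (objs s0 xv.1)); rewrite nth_default.
Qed.


Lemma Mono_txs (s s1 : St R) : txs s1 = txs s -> Mono s s1.
Proof. by move=> E j tj H1 H2; exists tj; rewrite E. Qed.

Lemma inv_upd (s s1 : St R) i t' : Inv s -> txs s1 = txs s -> objs s1 = objs s ->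
  (forall t, txs s i = Some t -> t_status t <> Committed) -> TxOK s t' ->
  Inv (upd_tx s1 i t').
Proof.
move=> [I O] E1 E2 N OK.
have M : Mono s (upd_tx s1 i t') by apply: Mono_upd (Mono_txs E1) N.
split.
  apply: (@txs_upd s _ i t') M _ _ _ I => /=; first by move=> k /negbTE ->; rewrite E1.
    by rewrite eqxx.
  apply: (TxOK_mono _ OK); exact: Mono_upd (Mono_txs E1) N.
move=> x n /=; rewrite E2; apply: (OKv_mono _ (O x n)); exact: Mono_upd (Mono_txs E1) N.
Qed.

Lemma live_TxOK s t : TxOK s t -> is_live (t_status t) ->
  t_tutl t = Inf \/ Big s (t_wts t).
Proof. by move=> [_ [B [C|[C|C]]]] L; [left|left; rewrite C B|right]. Qed.

Lemma TxOK_abort s t : TxOK s t -> TxOK s (abort_tx t).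
Proof. by apply: TxOK_sim. Qed.


Lemma inv_obj (s : St R) x vs : Inv s -> (forall n, OKv s (nth (v0 R) vs n)) ->
  Inv (upd_obj s x vs).
Proof.
move=> [I O] V; have M : Mono s (upd_obj s x vs) by apply: Mono_obj.
split.
  by move=> k tk /= /I; apply: TxOK_mono.
move=> y n /=; case: eqP => _; first exact: OKv_mono M (V n).
exact: OKv_mono M (O y n).
Qed.

Lemma inv_read s i t x : Inv s -> txs s i = Some t -> is_live (t_status t) ->
  Inv (read_nl s i t x).
Proof.
move=> IS Hi L; have [I O] := IS; have T := I _ _ Hi.
have N : forall t0, txs s i = Some t0 -> t_status t0 <> Committed.
  by move=> t0; rewrite Hi => -[<-]; apply: live_nc.
have w0 : 0 <= t_wts t := T.1.
rewrite /read_nl; case: prev_idx => [c|]; last first.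
  by apply: (inv_upd IS) => //; apply: TxOK_abort.
set t2 := set_tltl _ _.
have T2 : TxOK s t2.
  case: (next_tutl_spec (t_tutl t) w0 (O x)) => E.
    by apply: TxOK_sim T => //=.
  by apply: TxOK_big => //= _; apply: T.2.1.
case: ifP => _; first by apply: (inv_upd IS) => //; apply: TxOK_abort.
have I1 : Inv (upd_tx s i (set_rs t2 ((x, v_val (nth (v0 R) (objs s x) c)) :: t_rs t2))).
  by apply: (inv_upd IS) => //; apply: TxOK_sim T2.
apply: inv_obj => [|n]; first exact: I1. rewrite nth_set_nth /=.
have O1 := I1.2 x; case: eqP => _; last exact: O1.
by move=> w ww; apply: (O1 c).
Qed.


Definition P1 (a b : Tx R) := t_wts b = t_wts a /\ t_status b = t_status a /\ t_ct b = t_ct a.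
Definition P2 (a b : Tx R) := P1 a b /\ t_tutl b = t_tutl a.

Lemma P1r t : P1 t t. Proof. by []. Qed.
Lemma P1t a b c : P1 a b -> P1 b c -> P1 a c.
Proof. by move=> [A [B C]] [A' [B' C']]; split; [|split]; congruence. Qed.
Lemma P2r t : P2 t t. Proof. by []. Qed.
Lemma P2t a b c : P2 a b -> P2 b c -> P2 a c.
Proof. by move=> [X A] [Y B]; split; [apply: P1t X Y|congruence]. Qed.

Lemma inv_tryC K incVal s i t dA dB : Inv s -> txs s i = Some t ->
  is_live (t_status t) -> Inv (tryC K incVal s i t dA dB).
Proof.
move=> IS Hi L; have [I O] := IS; have T := I _ _ Hi.
have N : forall t0, txs s i = Some t0 -> t_status t0 <> Committed.
  by move=> t0; rewrite Hi => -[<-]; apply: live_nc.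
have w0 : 0 <= t_wts t := T.1.
have TL := live_TxOK T L.
rewrite /tryC; case: ifP => Hv.
  by apply: (inv_upd IS) => //; apply: TxOK_abort.
have PA := @phaseA_spec s dA (t_ws t) t [::] w0 O.
move: PA; case: phaseA => [t'|[t1 mkA]] /= [W [Ct [St Tu]]].
  apply: (inv_upd IS) => //; apply: TxOK_abort.
  split; first by rewrite W.
  split; first by rewrite St Ct => /(T.2.1).
  case: Tu => [->|]; last by rewrite W; right; right.
  by case: TL => [->|]; [left|rewrite W; right; right].
have TU1 : t_tutl t1 = Inf \/ Big s (t_wts t).
  by case: Tu => [->|]; [|right].
have K1 : forall c, emin (t_tutl t1) (Fin c) = Fin c \/ Big s (t_wts t).
  by move=> c; case: TU1 => [->|]; [left|right].
have AB : forall c, TxOK s (abort_tx (set_tutl (set_ct t1 (Fin c)) (emin (t_tutl t1) (Fin c)))).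
  move=> c; split; first by rewrite /= W.
  split=> //; case: (K1 c) => /= [->|]; [right; left| rewrite -W; right; right] => //.
case: ifP => _; first by apply: (inv_upd IS) => //; apply: AB.
case: phaseB => [mkB|]; last by apply: (inv_upd IS) => //; apply: AB.
set ctv := (cntr s + incVal)%N.
set tu := match emin (t_tutl t1) (Fin ctv) with Fin n => n | Inf => ctv end.
set SR := small_readers _ _ _.
set f1 := fun tk : Tx R => if is_aborted (t_status tk) then tk else _.
have Hf1 : forall tk, P1 tk (f1 tk) by move=> tk; rewrite /f1; case: ifP.
set s2 := foldl (map_tx f1) _ SR.
have [O1 [_ R1]] : objs s2 = objs (set_cntr s ctv) /\ _ /\ txrel P1 SR (set_cntr s ctv) s2 :=
  fold_map_tx P1r P1t Hf1 SR (set_cntr s ctv).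
have Hf2 : forall tk, P2 tk (set_valid tk false) by [].
set s3 := foldl _ s2 (mkA ++ mkB).
have [O2 [_ R2]] : objs s3 = objs s2 /\ _ /\ txrel P2 (mkA ++ mkB) s2 s3 :=
  fold_map_tx P2r P2t Hf2 (mkA ++ mkB) s2.
have [T4 N4] := install_fold K (t_wts t1) tu (t_ws t1) s3.
move: T4 N4.
set s4 := foldl _ s3 (t_ws t1) => T4 N4.
set tf := set_status _ Committed.
have Hsi : txs (upd_tx s4 i tf) i = Some tf by rewrite /= eqxx.
have Bigi : forall w, w < t_wts t -> Big (upd_tx s4 i tf) w.
  by move=> w ww; exists i, tf; split=> //; split=> //=; rewrite W.
have Hk : forall k, k != i -> txs (upd_tx s4 i tf) k = txs s3 k.
  by move=> k /negbTE ne /=; rewrite ne T4.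
have M : Mono s (upd_tx s4 i tf).
  move=> j tj Hj Cj; have ne : j != i.
    by apply/eqP=> E; subst j; apply: (N _ Hj Cj).
  rewrite Hk //; move: (R1 j) (R2 j); rewrite /= Hj.
  case: (txs s2 j) => [b|] //; case: (txs s3 j) => [c|] //= [[B1 [B2 B3]] _] [[[C1 [C2 C3]] _] _].
  by exists c; split=> //; split; congruence.
split.
  move=> k tk; case: (eqVneq k i) => [->|ne].
    rewrite Hsi => -[<-]; split; first by rewrite /= W.
    split=> //; case: (K1 ctv) => /= [->|B]; first by right; left.
    by right; right; rewrite W; apply: Big_mono M B.
  rewrite Hk //; move: (R1 k) (R2 k) => /=; case E: (txs s k) => [a|];
    case: (txs s2 k) => [b|] //; case: (txs s3 k) => [c|] //= [[B1 [B2 B3]] Bn] [[[C1 [C2 C3]] C4] _] [<-].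
  have Ta := I _ _ E.
  case: (boolP (k \in SR)) => kin.
    have [tk' [E' lt]] := small_readers_spec kin.
    move: E'; rewrite E => -[?]; subst tk'.
    apply: TxOK_big; first by rewrite C1 B1; apply: Ta.1.
      by rewrite C3 B3 C2 B2; apply: Ta.2.1.
    by rewrite C1 B1; apply: Bigi; rewrite -W.
  have := Bn kin => ?; subst b.
  by apply: (TxOK_mono M); apply: TxOK_sim Ta => //; rewrite C2.
move=> x n /=.
case: (N4 x n) => [[m ->]|E].
  rewrite O2 O1 /=; exact: OKv_mono M (O x m).
by move=> w w0' ww; apply: Bigi; rewrite -W; move: ww; rewrite E.
Qed.


Lemma inv_step K (C : R) incVal s e s' : 0 <= C -> Inv s -> step K C incVal s e s' -> Inv s'.
Proof.
move=> C0 IS H; case: s e s' / H IS.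
- move=> s0 i oits Hn _ cts its wts IS.
  apply: (inv_upd IS) => //; first by move=> t0; rewrite Hn.
  split=> /=; last by split=> //; left.
  by rewrite /wts addr_ge0 // mulr_ge0.
- by [].
- by move=> s0 i x t Hi L _ _ IS; apply: inv_read.
- move=> s0 i x v t Hi L IS; have [I O] := IS; apply: (inv_upd IS) => //.
    by move=> t0; rewrite Hi => -[<-]; apply: live_nc.
  by apply: TxOK_sim (I _ _ Hi).
- by move=> s0 i t dA dB Hi L IS; apply: inv_tryC.
- move=> s0 i t Hi L IS; have [I O] := IS; apply: (inv_upd IS) => //.
    by move=> t0; rewrite Hi => -[<-]; apply: live_nc.
  by apply: TxOK_abort (I _ _ Hi).
Qed.

Lemma inv_gen K (C : R) incVal H s : 0 <= C -> gen K C incVal H s -> Inv s.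
Proof.
move=> C0; elim=> [|H0 s0 e s1 _ IH St]; last exact: inv_step C0 IH St.
split=> // x n; rewrite /=; case: n => [|n] /=; first exact: OKv0.
by rewrite nth_nil; apply: OKv0.
Qed.

End Proof.

Theorem lemma15 (R : realFieldType) (K : nat) (C : R) (incVal : nat)
  (HK : (1 <= K)%N) (HC : 0 < C) (Hinc : (1 <= incVal)%N)
  (H : seq event) (s : St R) :
  gen K C incVal H s ->
  forall (i : nat) (ti : Tx R), txs s i = Some ti ->
  elt (t_tutl ti) (t_ct ti) ->
  exists (j : nat) (tj : Tx R),
    txs s j = Some tj /\ t_status tj = Committed /\ t_wts ti < t_wts tj.
Proof.
move=> G i ti Hi Hel.
have [I _] := inv_gen (ltW HC) G.
have [_ [_ T]] := I _ _ Hi.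
case: T => [E|[E|B]]; last exact: B.
  by move: Hel; rewrite E.
by move: Hel; rewrite E; case: (t_ct ti) => //= n; rewrite ltnn.
Qed.
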